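(* Consider the structured non-smooth problem described in the context and let $R_0\ge\|x^0-x^*\|$. (a) If $\alpha=0$ and the non-smooth DRAO method is run with $w_t=1$, $\theta_t=1$, $\eta_t=M_AD_\Pi/R_0$, $\tau_t=M_AR_0/D_\Pi$, then its output satisfies $f(\bar x^N)-f(x^* )\le M_AD_\Pi R_0/N$. (b) If $\alpha>0$ and the non-smooth DRAO method is run with $w_t=t$, $\theta_t=(t-1)/t$, $\eta_t=t\alpha/3$, $\tau_t=3M_A^2/(t\alpha)$, then its output satisfies $f(\bar x^N)-f(x^* )\le\big(\alpha\|x^0-x^*\|^2/3+3M_A^2D_\Pi^2/\alpha\big)/N^2$.
   Context: Let $X\subseteq\mathbb{R}^n$ be closed convex, $P\subseteq\Delta_m^+=\{p\in\mathbb{R}^m:\sum_ip_i=1,p\ge0\}$ closed convex, $\rho^*$ proper closed convex on $P$, $u$ proper closed convex and $\alpha$-strongly convex with $\alpha\ge0$ ($\alpha=0$ meaning merely convex). Structured non-smooth setting: for $i\in[m]$, $A_i\in\mathbb{R}^{m_i\times n}$, $\Pi_i\subseteq\mathbb{R}^{m_i}$ is closed, convex and bounded, $f_i^*$ is proper closed convex, and $f_i(x)=\max_{\pi_i\in\Pi_i}\langle A_ix,\pi_i\rangle-f_i^*(\pi_i)$. The problem is $\min_{x\in X}\{f(x):=\max_{p\in P}\sum_ip_if_i(x)-\rho^*(p)+u(x)\}$ with nonempty optimal set and optimal solution $x^*$. Let $M_A=\max_i\|A_i\|_{2,2}$ and $D_\Pi=\max_i\max_{\pi_i,\bar\pi_i\in\Pi_i}\|\pi_i-\bar\pi_i\|$.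 Non-smooth DRAO method: given $x^0\in X$, $\pi_i^0\in\Pi_i$, set $x^{-1}=x^0$. For $t=1,\dots,N$: $\tilde x^t=x^{t-1}+\theta_t(x^{t-1}-x^{t-2})$; $\pi_i^t=\arg\max_{\pi_i\in\Pi_i}\langle A_i\tilde x^t,\pi_i\rangle-f_i^*(\pi_i)-\frac{\tau_t}{2}\|\pi_i-\pi_i^{t-1}\|^2$; $v_i^t=A_i^\top\pi_i^t$; $x^t=\arg\min_{x\in X}\max_{p\in P}\sum_ip_i(\langle x,v_i^t\rangle-f_i^*(\pi_i^t))-\rho^*(p)+u(x)+\frac{\eta_t}{2}\|x-x^{t-1}\|^2$. Output $\bar x^N=\sum_{t=1}^Nw_tx^t/\sum_{t=1}^Nw_t$. *)

(* Defs.v *)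
From HB Require Import structures.
From mathcomp Require Import all_boot all_order all_algebra.
From mathcomp Require Import all_classical all_reals all_analysis.
Set Implicit Arguments. Unset Strict Implicit. Unset Printing Implicit Defensive.
Import Order.TTheory GRing.Theory Num.Theory.
Import numFieldNormedType.Exports.
Local Open Scope classical_set_scope.
Local Open Scope ring_scope.

Section Defs.
Variable R : realType.

Definition dotv k (u v : 'cV[R]_k) : R := \sum_(i < k) u i 0 * v i 0.
Definition norm2 k (u : 'cV[R]_k) : R := Num.sqrt (dotv u u).

Definition opnorm p q (A : 'M[R]_(p, q)) : R :=
  sup [set norm2 (A *m x) | x in [set x : 'cV[R]_q | norm2 x <= 1]].

Definition diam k (S : set 'cV[R]_k) : R :=
  sup [set r | exists a b, S a /\ S b /\ r = norm2 (a - b)].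

Definition bounded_set2 k (S : set 'cV[R]_k) : Prop :=
  exists M : R, forall x, S x -> norm2 x <= M.

Definition simplex m : set 'cV[R]_m :=
  [set p | (forall i, 0 <= p i 0) /\ \sum_(i < m) p i 0 = 1].

Definition proper_fun k (g : 'cV[R]_k -> \bar R) : Prop :=
  (forall x, g x != -oo%E) /\ (exists x, g x \is a fin_num).

Definition closed_fun k (g : 'cV[R]_k -> \bar R) : Prop :=
  closed [set xr : 'cV[R]_k * R | (g xr.1 <= xr.2%:E)%E].

Definition convex_fun k (g : 'cV[R]_k -> \bar R) : Prop :=
  forall (x y : 'cV[R]_k) (t : R), 0 < t < 1 ->
    (g (t *: x + (1 - t) *: y)%R <= t%:E * g x + (1 - t)%:E * g y)%E.

Definition pcc k (g : 'cV[R]_k -> \bar R) : Prop :=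
  [/\ proper_fun g, closed_fun g & convex_fun g].

Definition restrict_fun k (S : set 'cV[R]_k) (g : 'cV[R]_k -> \bar R) :=
  fun x => if `[< S x >] then g x else +oo%E.

Definition strongly_convex k (alpha : R) (g : 'cV[R]_k -> \bar R) : Prop :=
  convex_fun (fun x => (g x - ((alpha / 2) * norm2 x ^+ 2)%:E)%E).

Definition fi mi n (A : 'M[R]_(mi, n)) (Pi : set 'cV[R]_mi)
    (fstar : 'cV[R]_mi -> \bar R) (x : 'cV[R]_n) : \bar R :=
  ereal_sup [set ((dotv (A *m x) q)%:E - fstar q)%E | q in Pi].

Definition fobj m (mi : 'I_m -> nat) n (A : forall i, 'M[R]_(mi i, n))
    (Pi : forall i, set 'cV[R]_(mi i)) (fstar : forall i, 'cV[R]_(mi i) -> \bar R)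
    (P : set 'cV[R]_m) (rho : 'cV[R]_m -> \bar R) (u : 'cV[R]_n -> \bar R)
    (x : 'cV[R]_n) : \bar R :=
  (ereal_sup [set (\sum_(i < m) (p i 0)%:E * fi (A i) (Pi i) (fstar i) x - rho p)%E
              | p in P] + u x)%E.

(* Non-smooth DRAO: the sequences x (x 0 = x^0, x^{-1} = x^0) and pi
   (pi 0 = pi^0) satisfy the update rules for t = 1..N. *)
Definition DRAO_ns m (mi : 'I_m -> nat) n (X : set 'cV[R]_n)
    (A : forall i, 'M[R]_(mi i, n))
    (Pi : forall i, set 'cV[R]_(mi i)) (fstar : forall i, 'cV[R]_(mi i) -> \bar R)
    (P : set 'cV[R]_m) (rho : 'cV[R]_m -> \bar R) (u : 'cV[R]_n -> \bar R)
    (theta eta tau : nat -> R) (N : nat)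
    (x : nat -> 'cV[R]_n) (pi : nat -> forall i, 'cV[R]_(mi i)) : Prop :=
  [/\ X (x 0%N), (forall i, Pi i (pi 0%N i)) &
   forall t : nat, (1 <= t <= N)%N ->
     let xt := x t.-1 + theta t *: (x t.-1 - x t.-2) in
     let phi i (q : 'cV[R]_(mi i)) :=
       ((dotv (A i *m xt) q)%:E - fstar i q
        - ((tau t / 2) * norm2 (q - pi t.-1 i) ^+ 2)%:E)%E in
     let v i := (A i)^T *m pi t i in
     let psi (y : 'cV[R]_n) :=
       (ereal_sup [set (\sum_(i < m) (p i 0)%:E * ((dotv y (v i))%:E - fstar i (pi t i))
                        - rho p)%E | p in P]
        + u y + ((eta t / 2) * norm2 (y - x t.-1) ^+ 2)%:E)%E in
     [/\ (forall i, Pi i (pi t i) /\ forall q, Pi i q -> (phi i q <= phi i (pi t i))%E),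
         X (x t) &
         forall y, X y -> (psi (x t) <= psi y)%E]].

Definition xbar n (w : nat -> R) (x : nat -> 'cV[R]_n) (N : nat) : 'cV[R]_n :=
  (\sum_(1 <= t < N.+1) w t)^-1 *: \sum_(1 <= t < N.+1) w t *: x t.

End Defs.

(* Main.v *)
Require Import Defs.
From HB Require Import structures.
From mathcomp Require Import all_boot all_order all_algebra.
From mathcomp Require Import all_classical all_reals all_analysis.
From mathcomp Require Import ring lra.
Set Implicit Arguments. Unset Strict Implicit. Unset Printing Implicit Defensive.
Import Order.TTheory GRing.Theory Num.Theory.
Import numFieldNormedType.Exports.
Local Open Scope classical_set_scope.
Local Open Scope ring_scope.
Section Lin.
Variable R : realType.
Implicit Types (k : nat).

Lemma dotvC k (u v : 'cV[R]_k) : dotv u v = dotv v u.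
Proof. by apply: eq_bigr => i _; rewrite mulrC. Qed.

Lemma dotvDl k (u w v : 'cV[R]_k) : dotv (u + w) v = dotv u v + dotv w v.
Proof. by rewrite /dotv -big_split; apply: eq_bigr => i _; rewrite !mxE mulrDl. Qed.

Lemma dotvZl k (c : R) (u v : 'cV[R]_k) : dotv (c *: u) v = c * dotv u v.
Proof. by rewrite /dotv mulr_sumr; apply: eq_bigr => i _; rewrite !mxE mulrA. Qed.

Lemma dotvNl k (u v : 'cV[R]_k) : dotv (- u) v = - dotv u v.
Proof. by rewrite -scaleN1r dotvZl mulN1r. Qed.

Lemma dotvBl k (u w v : 'cV[R]_k) : dotv (u - w) v = dotv u v - dotv w v.
Proof. by rewrite dotvDl dotvNl. Qed.

Lemma dotvDr k (u w v : 'cV[R]_k) : dotv v (u + w) = dotv v u + dotv v w.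
Proof. by rewrite dotvC dotvDl !(dotvC v). Qed.

Lemma dotvZr k (c : R) (u v : 'cV[R]_k) : dotv v (c *: u) = c * dotv v u.
Proof. by rewrite dotvC dotvZl dotvC. Qed.

Lemma dotvBr k (u w v : 'cV[R]_k) : dotv v (u - w) = dotv v u - dotv v w.
Proof. by rewrite dotvC dotvBl !(dotvC v). Qed.

Lemma dotv0l k (v : 'cV[R]_k) : dotv 0 v = 0.
Proof. by rewrite /dotv big1 // => i _; rewrite mxE mul0r. Qed.

Lemma dotv_ge0 k (u : 'cV[R]_k) : 0 <= dotv u u.
Proof. by apply: sumr_ge0 => i _; rewrite -expr2 sqr_ge0. Qed.

Lemma norm2_ge0 k (u : 'cV[R]_k) : 0 <= norm2 u.
Proof. exact: sqrtr_ge0. Qed.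

Lemma norm2_sq k (u : 'cV[R]_k) : norm2 u ^+ 2 = dotv u u.
Proof. by rewrite sqr_sqrtr // dotv_ge0. Qed.

Lemma dotv_eq0 k (u : 'cV[R]_k) : dotv u u = 0 -> u = 0.
Proof.
move=> /eqP; rewrite psumr_eq0 => [/allP H|i _]; last by rewrite -expr2 sqr_ge0.
apply/matrixP => i j; rewrite (ord1 j) !mxE.
have := H i (mem_index_enum _); rewrite mulf_eq0 orbb => /eqP //.
Qed.

Lemma CS_sum k (a b : 'I_k -> R) :
  (\sum_i a i * b i) ^+ 2 <= (\sum_i a i ^+ 2) * (\sum_i b i ^+ 2).
Proof.
set X := \sum_i a i ^+ 2; set Y := \sum_i b i ^+ 2; set Z := \sum_i a i * b i.
have Y0 : 0 <= Y by apply: sumr_ge0 => i _; apply: sqr_ge0.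
have key : 0 <= \sum_i (Y * a i - Z * b i) ^+ 2 by apply: sumr_ge0 => i _; apply: sqr_ge0.
have E : \sum_i (Y * a i - Z * b i) ^+ 2 = Y * (X * Y - Z ^+ 2).
  transitivity (\sum_i (Y ^+ 2 * a i ^+ 2 - (2 * Y * Z) * (a i * b i) + Z ^+ 2 * b i ^+ 2)).
    by apply: eq_bigr => i _; ring.
  rewrite big_split /= sumrB -!mulr_sumr -/X -/Y -/Z; ring.
rewrite E in key.
have [Yp|Yz] := ltP 0 Y.
  by rewrite -subr_ge0; rewrite pmulr_rge0 in key.
have Yeq : Y = 0 by apply/eqP; rewrite eq_le Yz Y0.
have bz : forall i, b i = 0.
  move=> i; move/eqP: Yeq; rewrite psumr_eq0 => [/allP H|j _]; last exact: sqr_ge0.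
  by have := H i (mem_index_enum _); rewrite sqrf_eq0 => /eqP.
rewrite /Z big1 ?expr0n /=; last by move=> i _; rewrite bz mulr0.
by rewrite Yeq mulr0.
Qed.

Lemma dotv_CS2 k (u v : 'cV[R]_k) : dotv u v ^+ 2 <= dotv u u * dotv v v.
Proof.
have := CS_sum (fun i => u i 0) (fun i => v i 0).
by rewrite /dotv; under [X in _ <= X * _]eq_bigr => i _ do rewrite expr2;
   under [X in _ <= _ * X]eq_bigr => i _ do rewrite expr2.
Qed.

Lemma dotv_CS k (u v : 'cV[R]_k) : `|dotv u v| <= norm2 u * norm2 v.
Proof.
rewrite /norm2 -sqrtrM ?dotv_ge0 // -sqrtr_sqr.
by rewrite ler_sqrt ?dotv_CS2 // mulr_ge0 ?dotv_ge0.
Qed.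

Lemma dotv_trmx k l (A : 'M[R]_(k, l)) (x : 'cV[R]_l) (q : 'cV[R]_k) :
  dotv (A *m x) q = dotv x (A^T *m q).
Proof.
rewrite /dotv.
under eq_bigr => i _ do rewrite mxE mulr_suml.
rewrite exchange_big /=; apply: eq_bigr => j _.
rewrite mxE mulr_sumr; apply: eq_bigr => i _; rewrite !mxE; ring.
Qed.

Lemma norm2Z k (c : R) (v : 'cV[R]_k) : norm2 (c *: v) = `|c| * norm2 v.
Proof.
by rewrite /norm2 dotvZl dotvZr mulrA -expr2 sqrtrM ?sqr_ge0 // sqrtr_sqr.
Qed.

Lemma norm2_sym k (a b : 'cV[R]_k) : norm2 (a - b) = norm2 (b - a).
Proof. by rewrite -opprB -scaleN1r norm2Z normrN normr1 mul1r. Qed.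

Lemma dotv_sub_le k (a b : 'cV[R]_k) :
  dotv (a - b) (a - b) <= 2 * dotv a a + 2 * dotv b b.
Proof.
rewrite /dotv !mulr_sumr -big_split /=; apply: ler_sum => i _; rewrite !mxE.
have := sqr_ge0 (a i 0 + b i 0); nra.
Qed.

Lemma quad_id k (l : R) (y x c : 'cV[R]_k) :
  dotv (l *: y + (1 - l) *: x - c) (l *: y + (1 - l) *: x - c) =
  l * dotv (y - c) (y - c) + (1 - l) * dotv (x - c) (x - c)
  - l * (1 - l) * dotv (y - x) (y - x).
Proof.
rewrite /dotv !mulr_sumr -big_split -sumrB /=; apply: eq_bigr => i _.
rewrite !mxE; ring.
Qed.

Lemma norm2_0 k : norm2 (0 : 'cV[R]_k) = 0.
Proof. by rewrite /norm2 dotv0l sqrtr0. Qed.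

Lemma opnorm_has_ub p q (A : 'M[R]_(p, q)) :
  has_ubound [set norm2 (A *m x) | x in [set x : 'cV[R]_q | norm2 x <= 1]].
Proof.
set F := \sum_i \sum_j A i j ^+ 2.
exists (Num.max 1 F) => _ [x /= hx <-].
have hx2 : dotv x x <= 1.
  by rewrite -norm2_sq -(expr1n _ 2%N) ler_pXn2r // ?nnegrE ?norm2_ge0.
have h1 : dotv (A *m x) (A *m x) <= F.
  rewrite /dotv /F.
  apply: (@le_trans _ _ (\sum_i (\sum_j A i j ^+ 2) * dotv x x)).
    apply: ler_sum => i _; rewrite mxE -expr2.
    by have := CS_sum (fun j => A i j) (fun j => x j 0); rewrite /dotv;
      under [X in _ <= _ * X -> _]eq_bigr => j _ do rewrite expr2.
  rewrite -mulr_suml; rewrite -[X in _ <= X]mulr1; apply: ler_wpM2l => //.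
  by apply: sumr_ge0 => i _; apply: sumr_ge0 => j _; apply: sqr_ge0.
have [le1|gt1] := leP (norm2 (A *m x)) 1.
  by rewrite le_max le1.
rewrite le_max; apply/orP; right.
apply: le_trans h1; rewrite -norm2_sq expr2 ler_peMr //; [lra| exact: ltW].
Qed.

Lemma opnorm_ub p q (A : 'M[R]_(p, q)) (x : 'cV[R]_q) :
  norm2 (A *m x) <= opnorm A * norm2 x.
Proof.
have hub := opnorm_has_ub A.
have ub : forall y : 'cV[R]_q, norm2 y <= 1 -> norm2 (A *m y) <= opnorm A.
  move=> y hy; apply: sup_ubound => //; by exists y.
have [x0|xp] := eqVneq (norm2 x) 0.
  have : x = 0.
    apply: dotv_eq0; rewrite -norm2_sq x0; exact: expr0n.
  by move=> ->; rewrite mulmx0 !norm2_0 mulr0.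
have xpos : 0 < norm2 x by rewrite lt_neqAle eq_sym xp norm2_ge0.
have := ub ((norm2 x)^-1 *: x).
rewrite norm2Z ger0_norm ?invr_ge0 ?norm2_ge0 // mulVf // lexx => /(_ isT).
rewrite -scalemxAr norm2Z ger0_norm ?invr_ge0 ?norm2_ge0 //.
by rewrite ler_pdivrMl // mulrC.
Qed.

Lemma opnorm_ge0 p q (A : 'M[R]_(p, q)) : 0 <= opnorm A.
Proof.
have hub := opnorm_has_ub A.
have : norm2 (A *m 0) <= opnorm A.
  apply: sup_ubound => //; exists 0 => //=; rewrite norm2_0; exact: ler01.
by rewrite mulmx0 norm2_0.
Qed.

End Lin.
Section Real.
Variable R : realType.

Lemma young (x y z : R) : 0 <= x -> 0 <= y -> z ^+ 2 <= x * y -> z <= (x + y) / 2.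
Proof. move=> hx hy h. have h0 : 0 <= (x - y)^+2 by apply: sqr_ge0.
rewrite leNgt; apply/negP => hz.
have h1 : ((x+y)/2) * ((x+y)/2) < z * z.
  apply: (@le_lt_trans _ _ (((x+y)/2) * z)). apply: ler_wpM2l; lra. by rewrite ltr_pM2r; lra.
nra.
Qed.

Lemma lim_lemma (g c h : R) : 0 <= c ->
  (forall l : R, 0 < l -> l < 1 -> g + c * (1 - l) <= h) -> g + c <= h.
Proof.
move=> c0 H; rewrite leNgt; apply/negP => hlt.
set e := g + c - h.
have e0 : 0 < e by rewrite /e; lra.
have cp : 0 < c.
  rewrite lt_neqAle c0 andbT; apply/eqP => c00.
  have := H (1/2) ltac:(lra) ltac:(lra); rewrite -c00 mul0r addr0 => hh.
  move: hlt; rewrite -c00 addr0; lra.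
set l := Num.min (1/2) (e / (2 * c)).
have l0 : 0 < l by rewrite /l lt_min; apply/andP; split; [lra| apply: divr_gt0 => //; lra].
have l1 : l < 1 by rewrite /l gt_min; apply/orP; left; lra.
have hcl : c * l <= e / 2.
  have hl : l <= e / (2 * c) by rewrite /l ge_min lexx orbT.
  have -> : e / 2 = c * (e / (2 * c)).
    by field; rewrite gt_eqF.
  exact: ler_wpM2l.
have := H l l0 l1; rewrite /e in e0 hcl *; nra.
Qed.

Lemma three_point k (D : set 'cV[R]_k) (G : 'cV[R]_k -> R) (a : R) (xo : 'cV[R]_k) :
  0 <= a -> D xo -> (forall y, D y -> G xo <= G y) ->
  (forall y l, D y -> 0 < l -> l < 1 ->
     D (l *: y + (1 - l) *: xo) /\
     G (l *: y + (1 - l) *: xo) <= l * G y + (1 - l) * G xo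
                                   - a / 2 * (l * (1 - l)) * dotv (y - xo) (y - xo)) ->
  forall y, D y -> G xo + a / 2 * dotv (y - xo) (y - xo) <= G y.
Proof.
move=> a0 Dxo Hmin Hc y Dy.
have d0 := dotv_ge0 (y - xo).
apply: lim_lemma; first by apply: mulr_ge0 => //; apply: divr_ge0.
move=> l l0 l1.
have [Dz Gz] := Hc y l Dy l0 l1.
have := Hmin _ Dz => hm.
set c := a / 2 * dotv (y - xo) (y - xo).
have c0 : 0 <= c by apply: mulr_ge0 => //; apply: divr_ge0.
have h1 : l * G xo <= l * G y - c * (l * (1 - l)).
  move: Gz hm; rewrite /c. set d := dotv _ _. set q := a / 2.
  move=> Gz hm.
  have -> : q * d * (l * (1 - l)) = q * (l * (1 - l)) * d by ring.
  lra.
have h2 : l * (G xo + c * (1 - l)) <= l * G y.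
  have -> : l * (G xo + c * (1 - l)) = l * G xo + c * (l * (1 - l)) by ring.
  lra.
by rewrite ler_pM2l in h2.
Qed.

Lemma core_pi (N : nat) (w th eta a b P E F T : nat -> R) (c : R) :
  (0 < N)%N -> 0 <= c ->
  (forall t, (1 <= t <= N)%N ->
     T t <= c / 2 * (P t.-1 - P t - b t ^+ 2) + w t * E t - w t * th t * (E t.-1 + F t)) ->
  E 0%N = 0 -> F 1%N = 0 ->
  (forall t, (2 <= t <= N)%N -> w t * th t = w t.-1) ->
  (forall t, (2 <= t <= N)%N ->
     - (w t * th t * F t) - c / 2 * b t ^+ 2 <= w t.-1 * eta t.-1 / 2 * a t.-1 ^+ 2) ->
  w N * E N - c / 2 * P N <= w N * eta N / 2 * a N ^+ 2 ->
  \sum_(1 <= t < N.+1) T t <= c / 2 * P 0%N + \sum_(1 <= t < N.+1) w t * eta t / 2 * a t ^+ 2.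
Proof.
move=> N0 c0 HT E0 F1 Hw Hy Hlast.
have claim : forall s, (1 <= s <= N)%N ->
  \sum_(1 <= t < s.+1) T t <= c / 2 * P 0%N - c / 2 * P s + w s * E s
                              + \sum_(1 <= t < s) w t * eta t / 2 * a t ^+ 2.
  elim=> [//|s IH] /andP [_ hs].
  case: s IH hs => [|s] IH hs.
    rewrite big_nat1 big_geq //.
    have := HT 1%N hs; rewrite /= E0 F1 addr0 mulr0 subr0.
    have := sqr_ge0 (b 1%N); nra.
  have hs' : (1 <= s.+1 <= N)%N by rewrite /=; apply: ltnW.
  have := IH hs' => {}IH.
  rewrite big_nat_recr //= [X in _ <= _ + X]big_nat_recr //=.
  have := HT s.+2 hs; rewrite /= => h1.
  have := Hy s.+2 hs; rewrite /= => h2.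
  have := Hw s.+2 hs; rewrite /= => h3.
  rewrite h3 in h1 h2.
  lra.
have := claim N; rewrite N0 leqnn => /(_ isT) h.
rewrite [X in _ <= _ + X]big_nat_recr //=.
lra.
Qed.

Lemma core_x (N : nat) (w eta Tx h r : nat -> R) (al : R) :
  (0 < N)%N ->
  (forall t, (1 <= t <= N)%N -> Tx t + eta t / 2 * h t + (eta t + al) / 2 * r t <= eta t / 2 * r t.-1) ->
  (forall t, (1 <= t <= N)%N -> 0 <= w t) ->
  (forall t, (1 <= t < N)%N -> w t.+1 * eta t.+1 <= w t * (eta t + al)) ->
  (forall t, 0 <= r t) -> 0 <= w N * (eta N + al) ->
  \sum_(1 <= t < N.+1) w t * (Tx t + eta t / 2 * h t) <= w 1%N * eta 1%N / 2 * r 0%N.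
Proof.
move=> N0 H3 Hw Hm Hr Hl.
have claim : forall s, (1 <= s <= N)%N ->
  \sum_(1 <= t < s.+1) w t * (Tx t + eta t / 2 * h t)
     <= w 1%N * eta 1%N / 2 * r 0%N - w s * (eta s + al) / 2 * r s.
  elim=> [//|s IH] /andP [_ hs].
  case: s IH hs => [|s] IH hs.
    rewrite big_nat1.
    have := H3 1%N hs; have := Hw 1%N hs => w0 /= h1.
    have := ler_wpM2l w0 h1. move=> h2.
    set u1 := Tx 1%N in h2 *. nra.
  have hs' : (1 <= s.+1 <= N)%N by rewrite /=; apply: ltnW.
  have := IH hs' => {}IH.
  rewrite big_nat_recr //=.
  have := H3 s.+2 hs; have := Hw s.+2 hs => w0 /= h1.
  have h2 := ler_wpM2l w0 h1.
  have := Hm s.+1 hs => h3.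
  have := Hr s.+1 => r0.
  have h4 : (w s.+2 * eta s.+2 - w s.+1 * (eta s.+1 + al)) * r s.+1 <= 0.
    by apply: mulr_le0_ge0 => //; lra.
  set A1 := w s.+2 in h2 h4 *. set A2 := w s.+1 in IH h4 *. nra.
have := claim N; rewrite N0 leqnn => /(_ isT) hh.
have := Hr N => rN.
have : 0 <= w N * (eta N + al) / 2 * r N by apply: mulr_ge0 => //; apply: divr_ge0.
lra.
Qed.

End Real.
Section Gen.
Variable R : realType.

Lemma fin_of_le (e : \bar R) (r : R) : (e != -oo)%E -> (e <= r%:E)%E -> e \is a fin_num.
Proof.
move=> h1 h2; apply/fin_numP; split => //; apply/negP => /eqP E.
by rewrite E leye_eq in h2.
Qed.

Lemma cvx_mem k (X : set 'cV[R]_k) x y (l : R) : convex_set X -> X x -> X y ->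
  (0 <= l)%R -> (l <= 1)%R -> X (l *: x + (1 - l) *: y).
Proof.
move=> cX hx hy l0 l1.
by have := cX x y (Itv01 l0 l1); rewrite !inE => /(_ hx hy).
Qed.

Lemma quad_id0 k (l : R) (y x : 'cV[R]_k) :
  dotv (l *: y + (1 - l) *: x) (l *: y + (1 - l) *: x) =
  (l * dotv y y + (1 - l) * dotv x x - l * (1 - l) * dotv (y - x) (y - x))%R.
Proof. by have := quad_id l y x 0; rewrite !subr0. Qed.

Lemma dotv_conv k (l : R) (z y x : 'cV[R]_k) :
  dotv z (l *: y + (1 - l) *: x) = (l * dotv z y + (1 - l) * dotv z x)%R.
Proof. by rewrite dotvDr !dotvZr. Qed.

Lemma sc_real k (u : 'cV[R]_k -> \bar R) (alpha : R) :
  (forall x, u x != -oo)%E -> strongly_convex alpha u ->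
  forall y z (l : R), u y \is a fin_num -> u z \is a fin_num -> (0 < l)%R -> (l < 1)%R ->
  (u (l *: y + (1 - l) *: z)%R <=
    (l * fine (u y) + (1 - l) * fine (u z) - alpha / 2 * (l * (1 - l)) * dotv (y - z) (y - z))%:E)%E.
Proof.
move=> unN usc y z l uy uz l0 l1.
have := usc y z l; rewrite l0 l1 => /(_ isT).
rewrite -(fineK uy) -(fineK uz) -!EFinB -!EFinM -EFinD.
rewrite lee_subel_addr // -EFinD /=.
move=> h; apply: (le_trans h); rewrite lee_fin !norm2_sq quad_id0 le_eqVlt; apply/orP; left; apply/eqP; ring.
Qed.

Lemma conv_aux (a1 fy fp d1 d2 d3 zy zp l t : R) : (a1 <= l * fy + (1 - l) * fp)%R ->
  (a1 + t * (l * d1 + (1 - l) * d2 - l * (1 - l) * d3) - (l * zy + (1 - l) * zp) <=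
   l * (fy + t * d1 - zy) + (1 - l) * (fp + t * d2 - zp) - t * (l * (1 - l)) * d3)%R.
Proof.
move=> h; rewrite -subr_ge0.
have -> : (l * (fy + t * d1 - zy) + (1 - l) * (fp + t * d2 - zp) - t * (l * (1 - l)) * d3 -
  (a1 + t * (l * d1 + (1 - l) * d2 - l * (1 - l) * d3) - (l * zy + (1 - l) * zp)) =
  l * fy + (1 - l) * fp - a1)%R by ring.
by rewrite subr_ge0.
Qed.

Lemma pi_step k (Pk : set 'cV[R]_k) (fs : 'cV[R]_k -> \bar R) (z : 'cV[R]_k) (tau : R)
    (p0 p1 : 'cV[R]_k) :
  convex_set Pk -> convex_fun fs -> (forall q, fs q != -oo)%E ->
  (exists q0, Pk q0 /\ fs q0 \is a fin_num) -> (0 <= tau)%R -> Pk p1 ->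
  (forall q, Pk q -> ((dotv z q)%:E - fs q - ((tau / 2) * norm2 (q - p0) ^+ 2)%:E <=
                     (dotv z p1)%:E - fs p1 - ((tau / 2) * norm2 (p1 - p0) ^+ 2)%:E)%E) ->
  fs p1 \is a fin_num /\
  forall q, Pk q -> fs q \is a fin_num ->
    (dotv z (q - p1) - fine (fs q) + fine (fs p1) <=
     tau / 2 * (dotv (q - p0) (q - p0) - dotv (q - p1) (q - p1) - dotv (p1 - p0) (p1 - p0)))%R.
Proof.
move=> cP cf fN [q0 [Pq0 fq0]] t0 Pp1 Hmax.
have fp1 : fs p1 \is a fin_num.
  apply/fin_numP; split => //; apply/negP => /eqP E.
  have := Hmax q0 Pq0; rewrite E -(fineK fq0) -!EFinB.
  by rewrite addeNy /= leeNy_eq.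
split => // q Pq fq.
pose G (y : 'cV[R]_k) := (fine (fs y) + tau / 2 * dotv (y - p0) (y - p0) - dotv z y)%R.
pose D := [set y | Pk y /\ fs y \is a fin_num].
have := @three_point R k D G tau p1 t0 (conj Pp1 fp1).
have Hmin : forall y, D y -> (G p1 <= G y)%R.
  move=> y [Py fy]; have := Hmax y Py.
  rewrite -(fineK fy) -(fineK fp1) -!EFinB lee_fin /G !norm2_sq => h; lra.
move=> /(_ Hmin) H.
have := H _ _.
have Hc : forall y l, D y -> (0 < l)%R -> (l < 1)%R ->
   D (l *: y + (1 - l) *: p1) /\
   (G (l *: y + (1 - l) *: p1) <= l * G y + (1 - l) * G p1
        - tau / 2 * (l * (1 - l)) * dotv (y - p1) (y - p1))%R.
  move=> y l [Py fy] l0 l1.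
  have cvx := cf y p1 l; rewrite l0 l1 in cvx; have {}cvx := cvx isT.
  rewrite -(fineK fy) -(fineK fp1) -!EFinM -EFinD in cvx.
  have fz := fin_of_le (fN _) cvx.
  split; first by split => //; apply: cvx_mem => //; [exact: ltW | exact: ltW].
  rewrite -(fineK fz) lee_fin in cvx.
  rewrite /G.
  have -> : (l *: y + (1 - l) *: p1 - p0 = l *: (y - p0) + (1 - l) *: (p1 - p0))%R.
    by apply/matrixP => i j; rewrite !mxE; ring.
  rewrite quad_id0 dotv_conv.
  have -> : ((y - p0) - (p1 - p0) = y - p1)%R by rewrite opprB addrA subrK.
  set a1 := fine (fs (l *: y + (1 - l) *: p1)) in cvx *.
  set d1 := dotv (y - p0) (y - p0). set d2 := dotv (p1 - p0) (p1 - p0).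
  set d3 := dotv (y - p1) (y - p1).
  exact: conv_aux.
move=> _.
have := H Hc q (conj Pq fq); rewrite /G.
rewrite (dotvBr q p1 z); lra.
Qed.

End Gen.
Section Gen2.
Variable R : realType.

Lemma conv_aux2 (s1 sy sx u1 uy ux d1 d2 d3 l e al : R) :
  s1 <= l * sy + (1 - l) * sx ->
  u1 <= l * uy + (1 - l) * ux - al / 2 * (l * (1 - l)) * d3 ->
  s1 + u1 + e / 2 * (l * d1 + (1 - l) * d2 - l * (1 - l) * d3) <=
  l * (sy + uy + e / 2 * d1) + (1 - l) * (sx + ux + e / 2 * d2) - (e + al) / 2 * (l * (1 - l)) * d3.
Proof.
move=> h1 h2; rewrite -subr_ge0.
have -> : l * (sy + uy + e / 2 * d1) + (1 - l) * (sx + ux + e / 2 * d2) - (e + al) / 2 * (l * (1 - l)) * d3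
   - (s1 + u1 + e / 2 * (l * d1 + (1 - l) * d2 - l * (1 - l) * d3)) =
   (l * sy + (1 - l) * sx - s1) + (l * uy + (1 - l) * ux - al / 2 * (l * (1 - l)) * d3 - u1) by ring.
by apply: addr_ge0; rewrite subr_ge0.
Qed.

Lemma x_step k (X : set 'cV[R]_k) (S u : 'cV[R]_k -> \bar R) (alpha eta : R)
    (xprev xo ys : 'cV[R]_k) :
  convex_set X -> (forall y, S y != -oo)%E -> (forall y, u y != -oo)%E -> 0 <= alpha -> 0 <= eta ->
  (forall y z l, S y \is a fin_num -> S z \is a fin_num -> 0 < l -> l < 1 ->
     (S (l *: y + (1 - l) *: z)%R <= (l * fine (S y) + (1 - l) * fine (S z))%:E)%E) ->
  strongly_convex alpha u ->
  X xo ->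
  (forall y, X y -> (S xo + u xo + ((eta / 2) * norm2 (xo - xprev) ^+ 2)%:E <=
                      S y + u y + ((eta / 2) * norm2 (y - xprev) ^+ 2)%:E)%E) ->
  X ys -> S ys \is a fin_num -> u ys \is a fin_num ->
  [/\ S xo \is a fin_num, u xo \is a fin_num &
  fine (S xo) + fine (u xo) + eta / 2 * dotv (xo - xprev) (xo - xprev)
    + (eta + alpha) / 2 * dotv (ys - xo) (ys - xo)
  <= fine (S ys) + fine (u ys) + eta / 2 * dotv (ys - xprev) (ys - xprev)].
Proof.
move=> cX SN uN al0 e0 Scvx usc Xxo Hmin Xys Sys uys.
have h := Hmin ys Xys; rewrite -(fineK Sys) -(fineK uys) -!EFinD in h.
have Sxo : S xo \is a fin_num.
  apply/fin_numP; split; first exact: SN.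
  apply/negP => /eqP E; rewrite E (addye (uN xo)) addye // leye_eq in h.
have uxo : u xo \is a fin_num.
  apply/fin_numP; split; first exact: uN.
  apply/negP => /eqP E; rewrite E (addey (SN xo)) addye // leye_eq in h.
split => //.
pose G (y : 'cV[R]_k) := fine (S y) + fine (u y) + eta / 2 * dotv (y - xprev) (y - xprev).
pose D := [set y | X y /\ S y \is a fin_num /\ u y \is a fin_num].
have a0 : 0 <= eta + alpha by apply: addr_ge0.
have := @three_point R k D G (eta + alpha) xo a0 (conj Xxo (conj Sxo uxo)).
have Hm : forall y, D y -> G xo <= G y.
  move=> y [Xy [Sy uy]]; have := Hmin y Xy.
  rewrite -(fineK Sy) -(fineK uy) -(fineK Sxo) -(fineK uxo) -!EFinD lee_fin /G !norm2_sq /=.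
  by [].
move=> /(_ Hm) H.
have Hc : forall y l, D y -> 0 < l -> l < 1 ->
   D (l *: y + (1 - l) *: xo) /\
   G (l *: y + (1 - l) *: xo) <= l * G y + (1 - l) * G xo
        - (eta + alpha) / 2 * (l * (1 - l)) * dotv (y - xo) (y - xo).
  move=> y l [Xy [Sy uy]] l0 l1.
  have hS := Scvx y xo l Sy Sxo l0 l1.
  have hu' := @sc_real R k u alpha uN usc y xo l uy uxo l0 l1.
  have fS := fin_of_le (SN _) hS.
  have fu := fin_of_le (uN _) hu'.
  split; first by split; [apply: cvx_mem => //; [exact: ltW|exact: ltW] | split].
  rewrite -(fineK fS) lee_fin in hS.
  rewrite -(fineK fu) lee_fin in hu'.
  rewrite /G quad_id.
  exact: conv_aux2.
have := H Hc ys (conj Xys (conj Sys uys)); rewrite /G.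
lra.
Qed.

End Gen2.
Section Gen3.
Variable R : realType.

Section SupLin.
Variables (m k : nat) (P : set 'cV[R]_m) (rho : 'cV[R]_m -> \bar R) (L : 'cV[R]_m -> 'cV[R]_k -> R).
Hypothesis rhoN : forall p, P p -> (rho p != -oo)%E.
Hypothesis rhoex : exists p, P p /\ rho p \is a fin_num.
Hypothesis Laff : forall p y z l, L p (l *: y + (1 - l) *: z) = l * L p y + (1 - l) * L p z.

Definition Ssup (y : 'cV[R]_k) := ereal_sup [set ((L p y)%:E - rho p)%E | p in P].

Lemma Ssup_ub p y : P p -> ((L p y)%:E - rho p <= Ssup y)%E.
Proof. by move=> Pp; apply: ereal_sup_ubound; exists p. Qed.

Lemma Ssup_nNy y : (Ssup y != -oo)%E.
Proof.
case: rhoex => p [Pp fp]; have := Ssup_ub y Pp.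
rewrite -(fineK fp) -EFinB; apply: contraTneq => ->.
by rewrite leeNy_eq.
Qed.

Lemma rho_cases p : P p -> rho p \is a fin_num \/ rho p = +oo%E.
Proof.
move=> Pp; have [h|h] := boolP (rho p \is a fin_num); first by left.
right; case/fin_numPn: h => // E; by have := rhoN Pp; rewrite E.
Qed.

Lemma Ssup_elem p y : P p -> rho p \is a fin_num -> Ssup y \is a fin_num ->
  L p y - fine (rho p) <= fine (Ssup y).
Proof.
move=> Pp fp fs; have := Ssup_ub y Pp.
by rewrite -(fineK fp) -(fineK fs) -EFinB lee_fin.
Qed.

Lemma Ssup_cvx y z l : Ssup y \is a fin_num -> Ssup z \is a fin_num -> 0 < l -> l < 1 ->
  (Ssup (l *: y + (1 - l) *: z)%R <= (l * fine (Ssup y) + (1 - l) * fine (Ssup z))%:E)%E.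
Proof.
move=> fy fz l0 l1; apply: ge_ereal_sup => _ [p Pp <-].
case: (rho_cases Pp) => [fp|->]; last by rewrite addeNy leNye.
rewrite -(fineK fp) -EFinB lee_fin Laff.
have h1 := Ssup_elem Pp fp fy; have h2 := Ssup_elem Pp fp fz.
have h1' := ler_wpM2l (ltW l0) h1.
have h2' : (1 - l) * (L p z - fine (rho p)) <= (1 - l) * fine (Ssup z).
  by apply: ler_wpM2l => //; lra.
set r := fine (rho p) in h1 h2 h1' h2' *.
have -> : l * L p y + (1 - l) * L p z - r = l * (L p y - r) + (1 - l) * (L p z - r) by ring.
lra.
Qed.

End SupLin.

Lemma jensen n (u : 'cV[R]_n -> \bar R) (alpha : R) (w : nat -> R) (x : nat -> 'cV[R]_n) :
  (forall y, u y != -oo)%E -> strongly_convex alpha u -> 0 <= alpha ->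
  forall N, (0 < N)%N ->
  (forall t, (1 <= t <= N)%N -> 0 < w t) ->
  (forall t, (1 <= t <= N)%N -> u (x t) \is a fin_num) ->
  (u (xbar w x N) <= ((\sum_(1 <= t < N.+1) w t * fine (u (x t))) / (\sum_(1 <= t < N.+1) w t))%:E)%E.
Proof.
move=> uN usc al0; elim=> [//|N IH] _ wp uf.
have Wpos : forall M, (0 < M)%N -> (M <= N.+1)%N -> 0 < \sum_(1 <= t < M.+1) w t.
  move=> M M0 MN; rewrite big_nat_recl //.
  apply: ltr_wpDr; last by apply: wp; rewrite leqnn /=; apply: leq_trans MN.
  rewrite big_nat_cond; apply: sumr_ge0 => t /andP [/andP [_ ht] _]; apply: ltW; apply: wp.
  rewrite /=; apply: leq_trans MN; exact: ht.
case: N IH wp uf Wpos => [|N] IH wp uf Wpos.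
  rewrite /xbar !big_nat1 scalerA mulVf ?scale1r; last by rewrite gt_eqF // wp.
  rewrite mulrC mulKf ?gt_eqF ?wp // fineK //; exact: uf.
have wp' : forall t, (1 <= t <= N.+1)%N -> 0 < w t.
  by move=> t /andP [h1 h2]; apply: wp; rewrite h1 /=; apply: leqW.
have uf' : forall t, (1 <= t <= N.+1)%N -> u (x t) \is a fin_num.
  by move=> t /andP [h1 h2]; apply: uf; rewrite h1 /=; apply: leqW.
have {}IH := IH isT wp' uf'.
set W := \sum_(1 <= t < N.+2) w t.
set V := \sum_(1 <= t < N.+2) w t *: x t.
set U := \sum_(1 <= t < N.+2) w t * fine (u (x t)).
have W0 : 0 < W by apply: Wpos.
have wN : 0 < w N.+2 by apply: wp; rewrite /= leqnn.
have uN2 : u (x N.+2) \is a fin_num by apply: uf; rewrite /= leqnn.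
set l := W / (W + w N.+2).
have l0 : 0 < l by apply: divr_gt0 => //; apply: addr_gt0.
have l1 : l < 1 by rewrite ltr_pdivrMr ?mul1r; [lra | apply: addr_gt0].
have Ex : xbar w x N.+2 = l *: xbar w x N.+1 + (1 - l) *: x N.+2.
  rewrite /xbar -/W -/V big_nat_recr //= [X in _ *: X]big_nat_recr //= -/W -/V.
  have W1 : W + w N.+2 != 0 by rewrite gt_eqF // addr_gt0.
  have W2 : W != 0 by rewrite gt_eqF.
  rewrite scalerDr !scalerA; congr (_ + _); congr (_ *: _); rewrite /l; field; rewrite ?W1 ?W2 //.

have fx := fin_of_le (uN _) IH.
rewrite Ex; apply: (le_trans (sc_real uN usc fx uN2 l0 l1)).
rewrite lee_fin.
rewrite -(fineK fx) lee_fin in IH.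
rewrite big_nat_recr //= [X in _ <= _ / X]big_nat_recr //= -/W -/U.
have d0 := dotv_ge0 (xbar w x N.+1 - x N.+2).
have h1 : 0 <= alpha / 2 * (l * (1 - l)) * dotv (xbar w x N.+1 - x N.+2) (xbar w x N.+1 - x N.+2).
  apply: mulr_ge0 => //; apply: mulr_ge0; [lra | apply: mulr_ge0; lra].
have h2 := ler_wpM2l (ltW l0) IH.
rewrite -/W -/U in h2.
have -> : (U + w N.+2 * fine (u (x N.+2))) / (W + w N.+2) =
          l * (U / W) + (1 - l) * fine (u (x N.+2)).
  have W1 : W + w N.+2 != 0 by rewrite gt_eqF // addr_gt0.
  have W2 : W != 0 by rewrite gt_eqF.
  by rewrite /l; field; rewrite ?W1 ?W2.
lra.
Qed.

End Gen3.
Section Prelim.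
Variable R : realType.

Lemma le_bigmax0 m (F : 'I_m -> R) i : F i <= \big[Num.max/0]_(j < m) F j.
Proof. by rewrite (bigD1 i) //= le_max lexx. Qed.

Lemma bigmax_ge0 m (F : 'I_m -> R) : 0 <= \big[Num.max/0]_(j < m) F j.
Proof. by elim/big_rec: _ => // j y _ hy; rewrite le_max hy orbT. Qed.

Lemma diam_ub k (S : set 'cV[R]_k) a b : bounded_set2 S -> S a -> S b -> norm2 (a - b) <= diam S.
Proof.
move=> [M HM] Sa Sb.
have hub : has_ubound [set r | exists a b, S a /\ S b /\ r = norm2 (a - b)].
  exists (2 * M) => _ [a' [b' [Sa' [Sb' ->]]]].
  have ha := HM _ Sa'; have hb := HM _ Sb'.
  have ha0 := norm2_ge0 a'; have hb0 := norm2_ge0 b'.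
  have hx0 := norm2_ge0 (a' - b').
  have h := dotv_sub_le a' b'; rewrite -!norm2_sq in h.
  rewrite -(@ler_pXn2r _ 2) // ?nnegrE //; last lra.
  nra.
by apply: sup_ubound => //; exists a, b.
Qed.

Lemma dotv_suml k (I : Type) (r : seq I) (Q : pred I) (v : I -> 'cV[R]_k) q :
  dotv (\sum_(t <- r | Q t) v t) q = \sum_(t <- r | Q t) dotv (v t) q.
Proof.
apply: (big_morph (fun v => dotv v q)); first by move=> a b; rewrite dotvDl.
exact: dotv0l.
Qed.

End Prelim.
Lemma young_step (R : realType) (k Ma a b c Y F D : R) :
  0 <= k -> 0 <= Ma -> 0 <= a -> 0 <= b -> 0 <= c -> 0 <= Y -> b <= D ->
  `|F| <= Ma * a * b -> (D = 0 \/ (k * Ma) ^+ 2 <= c * Y) ->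
  k * F - c / 2 * b ^+ 2 <= Y / 2 * a ^+ 2.
Proof.
move=> k0 M0 a0 b0 c0 Y0 bD hF hD.
have h1 : k * F <= k * (Ma * a * b).
  apply: ler_wpM2l => //; apply: le_trans hF; exact: ler_norm.
have hY : 0 <= Y / 2 * a ^+ 2 by apply: mulr_ge0; [lra| apply: sqr_ge0].
have hb2 : 0 <= c / 2 * b ^+ 2 by apply: mulr_ge0; [lra| apply: sqr_ge0].
case: hD => [D0|hy].
  have b00 : b = 0 by apply/eqP; rewrite eq_le b0 -D0 bD.
  rewrite b00 !mulr0 in h1; rewrite b00 expr0n /= mulr0; lra.
have := @young R (c * b ^+ 2) (Y * a ^+ 2) (k * (Ma * a * b)).
have -> : (k * (Ma * a * b)) ^+ 2 = (k * Ma) ^+ 2 * (a ^+ 2 * b ^+ 2) by ring.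
have ab0 : 0 <= a ^+ 2 * b ^+ 2 by apply: mulr_ge0; apply: sqr_ge0.
have := ler_wpM2r ab0 hy => hh.
have -> : c * b ^+ 2 * (Y * a ^+ 2) = c * Y * (a ^+ 2 * b ^+ 2) by ring.
move=> /(_ (mulr_ge0 c0 (sqr_ge0 _)) (mulr_ge0 Y0 (sqr_ge0 _)) hh) hz.
lra.
Qed.

Unset Implicit Arguments.
Section Main.
Variables (R : realType) (n m : nat) (mi : 'I_m -> nat) (X : set 'cV[R]_n)
  (P : set 'cV[R]_m) (rho : 'cV[R]_m -> \bar R) (u : 'cV[R]_n -> \bar R) (alpha : R)
  (A : forall i, 'M[R]_(mi i, n)) (Pi : forall i, set 'cV[R]_(mi i))
  (fstar : forall i, 'cV[R]_(mi i) -> \bar R) (xs : 'cV[R]_n).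
Hypotheses (cX : convex_set X) (PS : P `<=` @simplex R m)
  (rhoN : forall p, P p -> (rho p != -oo)%E)
  (rhoex : exists p, P p /\ rho p \is a fin_num)
  (uN : forall y, (u y != -oo)%E) (al0 : 0 <= alpha) (usc : strongly_convex alpha u)
  (cPi : forall i : 'I_m, convex_set (Pi i)) (bPi : forall i : 'I_m, bounded_set2 (Pi i))
  (fsN : forall (i : 'I_m) q, (fstar i q != -oo)%E) (fscvx : forall i : 'I_m, convex_fun (fstar i))
  (fsex : forall i : 'I_m, exists q, Pi i q /\ fstar i q \is a fin_num)
  (Xxs : X xs) (fxs : fobj A Pi fstar P rho u xs \is a fin_num).

Let MA := \big[Num.max/0]_(i < m) opnorm (A i).
Let DPi := \big[Num.max/0]_(i < m) diam (Pi i).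
Let T y := ereal_sup [set (\sum_(i < m) (p i 0)%:E * fi (A i) (Pi i) (fstar i) y - rho p)%E | p in P].

Lemma fobjE y : fobj A Pi fstar P rho u y = (T y + u y)%E.
Proof. by []. Qed.

Lemma Txs_fin : T xs \is a fin_num.
Proof. by move: fxs; rewrite fobjE fin_numD => /andP []. Qed.

Lemma uxs_fin : u xs \is a fin_num.
Proof. by move: fxs; rewrite fobjE fin_numD => /andP []. Qed.

Lemma p_ge0 p i : P p -> 0 <= p i 0.
Proof. by move=> /PS [h _]. Qed.

Lemma p_sum1 p : P p -> \sum_(i < m) p i 0 = 1.
Proof. by move=> /PS [_ h]. Qed.

Lemma DPi_ub i a b : Pi i a -> Pi i b -> norm2 (a - b) <= DPi.
Proof.
move=> ha hb; apply: le_trans (diam_ub (bPi i) ha hb) _.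
exact: (le_bigmax0 (fun i => diam (Pi i))).
Qed.

Lemma MA_ub i (v : 'cV[R]_n) : norm2 (A i *m v) <= MA * norm2 v.
Proof.
apply: le_trans (opnorm_ub _ _) _; apply: ler_wpM2r; first exact: norm2_ge0.
exact: (le_bigmax0 (fun i => opnorm (A i))).
Qed.

Lemma MA_ge0 : 0 <= MA. Proof. exact: bigmax_ge0. Qed.
Lemma DPi_ge0 : 0 <= DPi. Proof. exact: bigmax_ge0. Qed.

Section Algo.
Variables (N : nat) (w th eta tau : nat -> R) (ctau : R) (x : nat -> 'cV[R]_n)
  (pi : nat -> forall i, 'cV[R]_(mi i)).
Hypotheses (N0 : (0 < N)%N) (ct0 : 0 <= ctau)
  (wpos : forall t, (1 <= t <= N)%N -> 0 < w t)
  (eta0 : forall t, (1 <= t <= N)%N -> 0 <= eta t)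
  (tau0 : forall t, (1 <= t <= N)%N -> 0 <= tau t)
  (wtau : forall t, (1 <= t <= N)%N -> w t * tau t = ctau)
  (wth : forall t, (2 <= t <= N)%N -> w t * th t = w t.-1)
  (cY : forall t, (2 <= t <= N)%N -> DPi = 0 \/ (w t * th t * MA) ^+ 2 <= ctau * (w t.-1 * eta t.-1))
  (cYN : DPi = 0 \/ (w N * MA) ^+ 2 <= ctau * (w N * eta N))
  (cX3 : forall t, (1 <= t < N)%N -> w t.+1 * eta t.+1 <= w t * (eta t + alpha))
  (Hd : DRAO_ns X A Pi fstar P rho u th eta tau N x pi).

Lemma pi_in t : (t <= N)%N -> forall i, Pi i (pi t i).
Proof.
case: Hd => _ H0 Hs; case: t => [_|t ht i]; first exact: H0.
have := Hs t.+1; rewrite ht /= => /(_ isT) H; cbv zeta in H.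
by case: H => /(_ i) [].
Qed.

Definition xt t := x t.-1 + th t *: (x t.-1 - x t.-2).

Lemma pi_facts t i : (1 <= t <= N)%N ->
  fstar i (pi t i) \is a fin_num /\
  forall q, Pi i q -> fstar i q \is a fin_num ->
   dotv (A i *m xt t) (q - pi t i) - fine (fstar i q) + fine (fstar i (pi t i)) <=
   tau t / 2 * (dotv (q - pi t.-1 i) (q - pi t.-1 i) - dotv (q - pi t i) (q - pi t i)
                - dotv (pi t i - pi t.-1 i) (pi t i - pi t.-1 i)).
Proof.
move=> ht; case: Hd => _ _ Hs; have H := Hs t ht; cbv zeta in H.
case: H => Hpi _ _; case: (Hpi i) => Pp Hmax.
apply: (@pi_step R (mi i) (Pi i) (fstar i) (A i *m xt t) (tau t) (pi t.-1 i) (pi t i)) => //.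
- exact: tau0.
Qed.


Definition Lt t (p : 'cV[R]_m) (y : 'cV[R]_n) :=
  \sum_(i < m) p i 0 * (dotv y ((A i)^T *m pi t i) - fine (fstar i (pi t i))).

Lemma Lt_aff t p (y z : 'cV[R]_n) (l : R) :
  Lt t p (l *: y + (1 - l) *: z) = l * Lt t p y + (1 - l) * Lt t p z.
Proof.
rewrite /Lt !mulr_sumr -big_split; apply: eq_bigr => i _.
rewrite dotvDl !dotvZl /=; ring.
Qed.

Lemma supE t y : (1 <= t <= N)%N ->
  ereal_sup [set (\sum_(i < m) (p i 0)%:E * ((dotv y ((A i)^T *m pi t i))%:E - fstar i (pi t i))
                  - rho p)%E | p in P] = Ssup P rho (Lt t) y.
Proof.
move=> ht; rewrite /Ssup; congr ereal_sup; apply: eq_imagel => p _.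
congr (_ + _)%E; rewrite /Lt -sumEFin; apply: eq_bigr => i _.
have hf := (pi_facts t i ht).1.
by rewrite -[in LHS](fineK hf) -EFinB -EFinM.
Qed.

Lemma Sxs_le t : (1 <= t <= N)%N -> (Ssup P rho (Lt t) xs <= T xs)%E.
Proof.
move=> ht; apply: ge_ereal_sup => _ [p Pp <-].
apply: le_trans (ereal_sup_ubound _); last by exists p.
apply: leeD2r; rewrite /Lt -sumEFin; apply: lee_sum => i _.
rewrite EFinM; apply: lee_wpmul2l; first by rewrite lee_fin; exact: p_ge0.
have hf := (pi_facts t i ht).1.
rewrite -dotv_trmx EFinB (fineK hf).
apply: ereal_sup_ubound; exists (pi t i) => //.
apply: pi_in; by case/andP: ht.
Qed.

Lemma x_facts t : (1 <= t <= N)%N ->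
  [/\ Ssup P rho (Lt t) (x t) \is a fin_num, u (x t) \is a fin_num,
      Ssup P rho (Lt t) xs \is a fin_num &
  fine (Ssup P rho (Lt t) (x t)) + fine (u (x t)) + eta t / 2 * dotv (x t - x t.-1) (x t - x t.-1)
    + (eta t + alpha) / 2 * dotv (xs - x t) (xs - x t)
  <= fine (Ssup P rho (Lt t) xs) + fine (u xs) + eta t / 2 * dotv (xs - x t.-1) (xs - x t.-1)].
Proof.
move=> ht; case: Hd => _ _ Hs; have H := Hs t ht; cbv zeta in H.
case: H => _ Xt Hx.
have Hx' : forall y, X y ->
   (Ssup P rho (Lt t) (x t) + u (x t) + ((eta t / 2) * norm2 (x t - x t.-1) ^+ 2)%:E <=
    Ssup P rho (Lt t) y + u y + ((eta t / 2) * norm2 (y - x t.-1) ^+ 2)%:E)%E.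
  by move=> y Xy; rewrite -(supE t (x t) ht) -(supE t y ht); exact: Hx.
have Sxs : Ssup P rho (Lt t) xs \is a fin_num.
  apply: (@fin_of_le _ _ (fine (T xs))); first exact: Ssup_nNy.
  rewrite fineK ?Txs_fin //; exact: Sxs_le.
have := x_step cX (Ssup_nNy (Lt t) rhoex) uN al0 (eta0 t ht)
   (fun y z l => @Ssup_cvx R m n P rho (Lt t) rhoN (Lt_aff t) y z l) usc Xt Hx' Xxs Sxs uxs_fin.
by case=> h1 h2 h3; split.
Qed.


Lemma core_i i q : Pi i q -> fstar i q \is a fin_num ->
  \sum_(1 <= t < N.+1) w t * (dotv (A i *m x t) (q - pi t i) - fine (fstar i q) + fine (fstar i (pi t i)))
  <= ctau / 2 * DPi ^+ 2 + \sum_(1 <= t < N.+1) w t * eta t / 2 * norm2 (x t - x t.-1) ^+ 2.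
Proof.
move=> Pq fq.
have := @core_pi R N w th eta (fun t => norm2 (x t - x t.-1)) (fun t => norm2 (pi t i - pi t.-1 i))
  (fun t => dotv (q - pi t i) (q - pi t i))
  (fun t => dotv (A i *m x t - A i *m x t.-1) (q - pi t i))
  (fun t => dotv (A i *m x t.-1 - A i *m x t.-2) (pi t.-1 i - pi t i))
  (fun t => w t * (dotv (A i *m x t) (q - pi t i) - fine (fstar i q) + fine (fstar i (pi t i))))
  ctau N0 ct0.
have HT : forall t, (1 <= t <= N)%N ->
   w t * (dotv (A i *m x t) (q - pi t i) - fine (fstar i q) + fine (fstar i (pi t i))) <=
   ctau / 2 * (dotv (q - pi t.-1 i) (q - pi t.-1 i) - dotv (q - pi t i) (q - pi t i)
               - norm2 (pi t i - pi t.-1 i) ^+ 2)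
   + w t * dotv (A i *m x t - A i *m x t.-1) (q - pi t i)
   - w t * th t * (dotv (A i *m x t.-1 - A i *m x t.-1.-1) (q - pi t.-1 i)
                   + dotv (A i *m x t.-1 - A i *m x t.-2) (pi t.-1 i - pi t i)).
  move=> t ht.
  have [_ h3] := pi_facts t i ht; have h := h3 q Pq fq.
  have e1 : A i *m xt t = A i *m x t.-1 + th t *: (A i *m x t.-1 - A i *m x t.-2).
    by rewrite /xt mulmxDr -scalemxAr mulmxBr.
  have e3 : (q - pi t.-1 i) + (pi t.-1 i - pi t i) = q - pi t i by rewrite addrA subrK.
  have e2 : dotv (A i *m x t) (q - pi t i) = dotv (A i *m xt t) (q - pi t i)
     + dotv (A i *m x t - A i *m x t.-1) (q - pi t i)
     - th t * (dotv (A i *m x t.-1 - A i *m x t.-1.-1) (q - pi t.-1 i)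
              + dotv (A i *m x t.-1 - A i *m x t.-2) (pi t.-1 i - pi t i)).
    rewrite -dotvDr e3 e1 dotvDl dotvZl !dotvBl; ring.
  rewrite e2 norm2_sq -(wtau t ht).
  have hw := wpos t ht.
  have := ler_wpM2l (ltW hw) h => h'.
  set a1 := dotv (A i *m xt t) (q - pi t i) in h' *.
  set a2 := dotv (q - pi t.-1 i) (q - pi t.-1 i) in h' *.
  set a3 := dotv (q - pi t i) (q - pi t i) in h' *.
  set a4 := dotv (pi t i - pi t.-1 i) (pi t i - pi t.-1 i) in h' *.
  set a5 := fine (fstar i q) in h' *. set a6 := fine (fstar i (pi t i)) in h' *.
  lra.
move=> /(_ HT).
have E0 : dotv (A i *m x 0%N - A i *m x 0%N.-1) (q - pi 0%N i) = 0 by rewrite /= subrr dotv0l.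
have F1 : dotv (A i *m x 1%N.-1 - A i *m x 1%N.-2) (pi 1%N.-1 i - pi 1%N i) = 0.
  by rewrite /= subrr dotv0l.
move=> /(_ E0 F1 wth).
have Hy : forall t, (2 <= t <= N)%N ->
   - (w t * th t * dotv (A i *m x t.-1 - A i *m x t.-2) (pi t.-1 i - pi t i))
   - ctau / 2 * norm2 (pi t i - pi t.-1 i) ^+ 2
   <= w t.-1 * eta t.-1 / 2 * norm2 (x t.-1 - x t.-1.-1) ^+ 2.
  move=> t ht.
  have ht1 : (1 <= t.-1 <= N)%N.
    case/andP: ht => h1 h2; apply/andP; split; first by case: t h1 h2 => [|[|t]].
    by apply: leq_trans (leq_pred _) h2.
  have ht' : (1 <= t <= N)%N by case/andP: ht => h1 h2; rewrite h2 andbT; apply: ltnW.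
  rewrite -mulrN.
  apply: (young_step (D := DPi)).
  - by rewrite wth //; apply: ltW; apply: wpos.
  - exact: MA_ge0.
  - exact: norm2_ge0.
  - exact: norm2_ge0.
  - exact: ct0.
  - by apply: mulr_ge0; [apply: ltW; apply: wpos | apply: eta0].
  - apply: DPi_ub; apply: pi_in; [by case/andP: ht'| ].
    by apply: leq_trans (leq_pred _) _; case/andP: ht'.
  - rewrite normrN; apply: le_trans (dotv_CS _ _) _.
    rewrite -mulmxBr (norm2_sym (pi t.-1 i)); apply: ler_wpM2r; first exact: norm2_ge0.
    exact: MA_ub.
  - exact: cY.
move=> /(_ Hy).
have Hlast : w N * dotv (A i *m x N - A i *m x N.-1) (q - pi N i)
   - ctau / 2 * dotv (q - pi N i) (q - pi N i) <= w N * eta N / 2 * norm2 (x N - x N.-1) ^+ 2.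
  have hN : (1 <= N <= N)%N by rewrite N0 leqnn.
  rewrite -norm2_sq.
  apply: (young_step (D := DPi)).
  - by apply: ltW; apply: wpos.
  - exact: MA_ge0.
  - exact: norm2_ge0.
  - exact: norm2_ge0.
  - exact: ct0.
  - by apply: mulr_ge0; [apply: ltW; apply: wpos | apply: eta0].
  - by apply: DPi_ub => //; apply: pi_in.
  - apply: le_trans (dotv_CS _ _) _.
    rewrite -mulmxBr; apply: ler_wpM2r; first exact: norm2_ge0.
    exact: MA_ub.
  - exact: cYN.
move=> /(_ Hlast) hc.
apply: le_trans hc _; rewrite lerD2r.
apply: ler_wpM2l; first by apply: divr_ge0.
rewrite -norm2_sq; rewrite ler_pXn2r // ?nnegrE ?norm2_ge0 ?DPi_ge0 //.
by apply: DPi_ub => //; apply: pi_in.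
Qed.


Let W := \sum_(1 <= t < N.+1) w t.
Let K := ctau / 2 * DPi ^+ 2 + \sum_(1 <= t < N.+1) w t * eta t / 2 * norm2 (x t - x t.-1) ^+ 2.
Definition Bi i := (\sum_(1 <= t < N.+1) w t * (dotv (A i *m x t) (pi t i) - fine (fstar i (pi t i))) + K) / W.

Lemma W_gt0 : 0 < W.
Proof.
rewrite /W big_nat_recr //=; apply: ltr_wpDl; last by apply: wpos; rewrite N0 leqnn.
rewrite big_nat_cond; apply: sumr_ge0 => t /andP [/andP [h1 h2] _]; apply: ltW; apply: wpos.
by rewrite h1 /=; apply: ltnW.
Qed.

Lemma xbar_dot i q : dotv (A i *m xbar w x N) q = (\sum_(1 <= t < N.+1) w t * dotv (A i *m x t) q) / W.
Proof.
rewrite /xbar -scalemxAr dotvZl mulmx_sumr dotv_suml mulrC; congr (_ * _).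
by apply: eq_bigr => t _; rewrite -scalemxAr dotvZl.
Qed.

Lemma fi_bound i : (fi (A i) (Pi i) (fstar i) (xbar w x N) <= (Bi i)%:E)%E.
Proof.
apply: ge_ereal_sup => _ [q Pq <-].
have [fq|fq] : fstar i q \is a fin_num \/ fstar i q = +oo%E.
  have [h|h] := boolP (fstar i q \is a fin_num); first by left.
  right; case/fin_numPn: h => // E; by have := fsN i q; rewrite E.
  2: by rewrite fq addeNy leNye.
rewrite -(fineK fq) -EFinB lee_fin xbar_dot /Bi.
have hc := core_i i q Pq fq.
set c := fine (fstar i q) in hc *.
set S1 := \sum_(1 <= t < N.+1) w t * dotv (A i *m x t) q.
set S2 := \sum_(1 <= t < N.+1) w t * (dotv (A i *m x t) (pi t i) - fine (fstar i (pi t i))).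
have e : \sum_(1 <= t < N.+1) w t * (dotv (A i *m x t) (q - pi t i) - c + fine (fstar i (pi t i)))
   = S1 - c * W - S2.
  rewrite /S1 /S2 /W mulr_sumr -!sumrB; apply: eq_bigr => t _; rewrite dotvBr; ring.
rewrite e -/K in hc.
have W0 := W_gt0.
have -> : S1 / W - c = (S1 - c * W) / W by field; rewrite gt_eqF.
rewrite ler_pM2r ?invr_gt0 //; lra.
Qed.

Definition Gt t := fine (Ssup P rho (Lt t) (x t)) + fine (u (x t)).
Let BU := (\sum_(1 <= t < N.+1) w t * fine (u (x t))) / W.
Let BT := (\sum_(1 <= t < N.+1) w t * Gt t + K) / W - BU.

Lemma Tbar_bound : (T (xbar w x N) <= BT%:E)%E.
Proof.
apply: ge_ereal_sup => _ [p Pp <-].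
have hsum : (\sum_(i < m) (p i 0)%:E * fi (A i) (Pi i) (fstar i) (xbar w x N) <=
             (\sum_(i < m) p i 0 * Bi i)%:E)%E.
  rewrite -sumEFin; apply: lee_sum => i _; rewrite EFinM; apply: lee_wpmul2l.
    by rewrite lee_fin; exact: p_ge0.
  exact: fi_bound.
case: (rho_cases rhoN Pp) => [fr|->]; last by rewrite addeNy leNye.
apply: le_trans (leeD2r _ hsum) _; rewrite -(fineK fr) -EFinB lee_fin.
set r := fine (rho p).
have W0 := W_gt0.
have e1 : \sum_(i < m) p i 0 * Bi i = (\sum_(1 <= t < N.+1) w t * Lt t p (x t) + K) / W.
  have -> : \sum_(1 <= t < N.+1) w t * Lt t p (x t) =
            \sum_(i < m) p i 0 * \sum_(1 <= t < N.+1) w t * (dotv (A i *m x t) (pi t i) - fine (fstar i (pi t i))).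
    rewrite /Lt; under eq_bigr do rewrite mulr_sumr.
    rewrite exchange_big /=; apply: eq_bigr => i _; rewrite mulr_sumr; apply: eq_bigr => t _.
    rewrite dotv_trmx; ring.
  rewrite /Bi.
  transitivity (\sum_(i < m) (p i 0 * (\sum_(1 <= t < N.+1) w t *
      (dotv (A i *m x t) (pi t i) - fine (fstar i (pi t i)))) / W + p i 0 * K / W)).
    by apply: eq_bigr => i _; ring.
  by rewrite big_split /= -!mulr_suml (p_sum1 p Pp) mul1r -mulrDl.
have hs : \sum_(1 <= t < N.+1) w t * (Lt t p (x t) - r + fine (u (x t))) <=
          \sum_(1 <= t < N.+1) w t * Gt t.
  rewrite big_nat_cond [X in _ <= X]big_nat_cond; apply: ler_sum => t /andP [ht _].
  apply: ler_wpM2l; first by apply: ltW; apply: wpos.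
  have [h1 h2 _ _] := x_facts t ht.
  have := Ssup_elem Pp fr h1; rewrite /Gt -/r; lra.
have es : \sum_(1 <= t < N.+1) w t * (Lt t p (x t) - r + fine (u (x t))) =
   \sum_(1 <= t < N.+1) w t * Lt t p (x t) - r * W + \sum_(1 <= t < N.+1) w t * fine (u (x t)).
  rewrite /W mulr_sumr -sumrB -big_split /=; apply: eq_bigr => t _; ring.
rewrite es in hs.
rewrite e1 /BT /BU.
set SL := \sum_(1 <= t < N.+1) w t * Lt t p (x t) in hs *.
set SG := \sum_(1 <= t < N.+1) w t * Gt t in hs *.
set SU := \sum_(1 <= t < N.+1) w t * fine (u (x t)) in hs *.
have -> : (SL + K) / W - r = (SL + K - r * W) / W by field; rewrite gt_eqF.
have -> : (SG + K) / W - SU / W = (SG + K - SU) / W by field; rewrite gt_eqF.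
rewrite ler_pM2r ?invr_gt0 //; lra.
Qed.

Lemma generic_bound :
  (fobj A Pi fstar P rho u (xbar w x N) <= fobj A Pi fstar P rho u xs +
    ((w 1%N * eta 1%N / 2 * norm2 (x 0%N - xs) ^+ 2 + ctau / 2 * DPi ^+ 2) / W)%:E)%E.
Proof.
rewrite fobjE.
have hU := @jensen R n u alpha w x uN usc al0 N N0 wpos (fun t ht => (let: And4 _ h _ _ := x_facts t ht in h)).
apply: le_trans (leeD Tbar_bound hU) _.
rewrite -EFinD -(fineK fxs) -EFinD lee_fin.
have W0 := W_gt0.
pose Gs t := fine (Ssup P rho (Lt t) xs) + fine (u xs).
have hcx := @core_x R N w eta (fun t => Gt t - Gs t) (fun t => dotv (x t - x t.-1) (x t - x t.-1))
  (fun t => dotv (xs - x t) (xs - x t)) alpha N0.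
have H1 : forall t, (1 <= t <= N)%N ->
   Gt t - Gs t + eta t / 2 * dotv (x t - x t.-1) (x t - x t.-1) +
   (eta t + alpha) / 2 * dotv (xs - x t) (xs - x t) <= eta t / 2 * dotv (xs - x t.-1) (xs - x t.-1).
  move=> t ht; have [_ _ _ h] := x_facts t ht; rewrite /Gt /Gs; lra.
have := hcx H1 (fun t ht => ltW (wpos t ht)) cX3 (fun t => dotv_ge0 _).
have hN : 0 <= w N * (eta N + alpha).
  have hN' : (1 <= N <= N)%N by rewrite N0 leqnn.
  by apply: mulr_ge0; [apply: ltW; apply: wpos | apply: addr_ge0 => //; apply: eta0].
move=> /(_ hN) hc.
have hGs : \sum_(1 <= t < N.+1) w t * Gs t <= W * fine (fobj A Pi fstar P rho u xs).
  rewrite /W mulr_suml big_nat_cond [X in _ <= X]big_nat_cond; apply: ler_sum => t /andP [ht _].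
  apply: ler_wpM2l; first by apply: ltW; apply: wpos.
  rewrite /Gs fobjE fineD ?Txs_fin ?uxs_fin // lerD2r.
  have [_ _ h3 _] := x_facts t ht.
  by apply: fine_le => //; [exact: Txs_fin | exact: Sxs_le].
have es : \sum_(1 <= t < N.+1) w t * (Gt t - Gs t + eta t / 2 * dotv (x t - x t.-1) (x t - x t.-1))
  = \sum_(1 <= t < N.+1) w t * Gt t + \sum_(1 <= t < N.+1) w t * eta t / 2 * norm2 (x t - x t.-1) ^+ 2
    - \sum_(1 <= t < N.+1) w t * Gs t.
  rewrite -big_split -sumrB /=; apply: eq_bigr => t _; rewrite norm2_sq; ring.
rewrite es in hc.
rewrite /BT /BU /K.
rewrite -norm2_sq norm2_sym in hc.
set SG := \sum_(1 <= t < N.+1) w t * Gt t in hc *.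
set SH := \sum_(1 <= t < N.+1) w t * eta t / 2 * norm2 (x t - x t.-1) ^+ 2 in hc *.
set SGs := \sum_(1 <= t < N.+1) w t * Gs t in hc hGs *.
set SU := \sum_(1 <= t < N.+1) w t * fine (u (x t)).
set F := fine (fobj A Pi fstar P rho u xs) in hGs *.
have -> : (SG + (ctau / 2 * DPi ^+ 2 + SH)) / W - SU / W + SU / W =
          (SG + (ctau / 2 * DPi ^+ 2 + SH)) / W by ring.
have -> : F + (w 1%N * eta 1%N / 2 * norm2 (x 0%N - xs) ^+ 2 + ctau / 2 * DPi ^+ 2) / W =
          (F * W + (w 1%N * eta 1%N / 2 * norm2 (x 0%N - xs) ^+ 2 + ctau / 2 * DPi ^+ 2)) / W.
  by field; rewrite gt_eqF.
rewrite ler_pM2r ?invr_gt0 //.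
lra.
Qed.

End Algo.
End Main.
Unset Implicit Arguments.

Lemma sum_nat_id (R : realType) (N : nat) :
  (\sum_(1 <= t < N.+1) (t%:R : R)) *+ 2 = N%:R * N.+1%:R.
Proof.
elim: N => [|N IH]; first by rewrite big_geq // mul0rn; ring.
rewrite big_nat_recr //= mulrnDl IH -!natr1; ring.
Qed.

Theorem theorem3p3 (R : realType) (n m : nat) (mi : 'I_m -> nat)
  (X : set 'cV[R]_n) (P : set 'cV[R]_m) (rho : 'cV[R]_m -> \bar R)
  (u : 'cV[R]_n -> \bar R) (alpha : R)
  (A : forall i, 'M[R]_(mi i, n)) (Pi : forall i, set 'cV[R]_(mi i))
  (fstar : forall i, 'cV[R]_(mi i) -> \bar R)
  (xs : 'cV[R]_n) (R0 : R) :
  closed X -> convex_set X ->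
  closed P -> convex_set P -> P `<=` @simplex R m ->
  pcc (restrict_fun P rho) ->
  pcc u -> 0 <= alpha -> strongly_convex alpha u ->
  (forall i, [/\ closed (Pi i), convex_set (Pi i) & bounded_set2 (Pi i)]) ->
  (forall i, pcc (fstar i)) ->
  (forall i, exists q, Pi i q /\ fstar i q \is a fin_num) ->
  X xs -> fobj A Pi fstar P rho u xs \is a fin_num ->
  (forall y, X y -> (fobj A Pi fstar P rho u xs <= fobj A Pi fstar P rho u y)%E) ->
  let MA := \big[Num.max/0]_(i < m) opnorm (A i) in
  let DPi := \big[Num.max/0]_(i < m) diam (Pi i) in
  (* (a) *)
  (alpha = 0 -> 0 < R0 ->
   forall (N : nat) (x : nat -> 'cV[R]_n) (pi : nat -> forall i, 'cV[R]_(mi i)),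
   (0 < N)%N -> norm2 (x 0%N - xs) <= R0 ->
   DRAO_ns X A Pi fstar P rho u (fun _ => 1) (fun _ => MA * DPi / R0)
           (fun _ => MA * R0 / DPi) N x pi ->
   (fobj A Pi fstar P rho u (xbar (fun _ => 1%R) x N)
      <= fobj A Pi fstar P rho u xs + (MA * DPi * R0 / N%:R)%:E)%E) /\
  (* (b) *)
  (0 < alpha ->
   forall (N : nat) (x : nat -> 'cV[R]_n) (pi : nat -> forall i, 'cV[R]_(mi i)),
   (0 < N)%N -> norm2 (x 0%N - xs) <= R0 ->
   DRAO_ns X A Pi fstar P rho u (fun t => (t%:R - 1) / t%:R)
           (fun t => t%:R * alpha / 3) (fun t => 3 * MA ^+ 2 / (t%:R * alpha)) N x pi ->
   (fobj A Pi fstar P rho u (xbar (fun t => t%:R%R) x N)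
      <= fobj A Pi fstar P rho u xs
         + ((alpha * norm2 (x 0%N - xs) ^+ 2 / 3 + 3 * MA ^+ 2 * DPi ^+ 2 / alpha)
            / (N%:R ^+ 2))%:E)%E).
Proof.
move=> _ cX _ _ PS [[rN rex] _ _] [[uN _] _ _] al0 usc HPi Hfs fsex Xxs fxs _ MA DPi.
have rhoN : forall p, P p -> (rho p != -oo)%E.
  by move=> p Pp; have := rN p; rewrite /restrict_fun asboolT.
have rhoex : exists p, P p /\ rho p \is a fin_num.
  case: rex => p; rewrite /restrict_fun; case: (asboolP (P p)) => // Pp h; by exists p.
have cPi : forall i, convex_set (Pi i) by move=> i; case: (HPi i).
have bPi : forall i, bounded_set2 (Pi i) by move=> i; case: (HPi i).
have fsN : forall i q, (fstar i q != -oo)%E by move=> i q; case: (Hfs i) => [[h _] _ _].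
have fscvx : forall i, convex_fun (fstar i) by move=> i; case: (Hfs i).
have MA0 : 0 <= MA by exact: bigmax_ge0.
have D0 : 0 <= DPi by exact: bigmax_ge0.
have GB := generic_bound R n m mi X P rho u alpha A Pi fstar xs cX PS rhoN rhoex uN al0 usc cPi bPi fsN fscvx fsex Xxs fxs.
split.
- move=> a0 R0p N x pi N0 hx0 Hd.
  have ct0 : 0 <= MA * R0 / DPi by apply: divr_ge0 => //; apply: mulr_ge0 => //; exact: ltW.
  have eta0 : 0 <= MA * DPi / R0 by apply: divr_ge0 => //; [apply: mulr_ge0 | exact: ltW].
  have cYg : DPi = 0 \/ (1 * MA) ^+ 2 <= MA * R0 / DPi * (1 * (MA * DPi / R0)).
    have [->|Dn] := eqVneq DPi 0; first by left.
    right; rewrite le_eqVlt; apply/orP; left; apply/eqP; field.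
    by apply/andP; split => //; rewrite gt_eqF.
  have := GB N (fun _ => 1) (fun _ => 1) (fun _ => MA * DPi / R0) (fun _ => MA * R0 / DPi)
     (MA * R0 / DPi) x pi N0 ct0 (fun _ _ => ltr01) (fun _ _ => eta0) (fun _ _ => ct0)
     (fun _ _ => mul1r _) (fun _ _ => mulr1 _).
  have cY : forall t : nat, (1 < t <= N)%N ->
     DPi = 0 \/ (1 * 1 * MA) ^+ 2 <= MA * R0 / DPi * (1 * (MA * DPi / R0)).
    by move=> t _; rewrite mulr1.
  have cX3 : forall t : nat, (0 < t < N)%N -> 1 * (MA * DPi / R0) <= 1 * (MA * DPi / R0 + alpha).
    by move=> t _; rewrite a0 addr0.
  move=> /(_ cY cYg cX3 Hd) h.
  apply: le_trans h _; apply: leeD2l; rewrite lee_fin.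
  rewrite sumr_const_nat subn1 /= -[1 *+ N]/(N%:R).
  have Np : (0 : R) < N%:R by rewrite ltr0n.
  rewrite ler_pM2r ?invr_gt0 //.
  have hr : norm2 (x 0%N - xs) ^+ 2 <= R0 ^+ 2.
    by rewrite ler_pXn2r // ?nnegrE ?norm2_ge0 //; exact: ltW.
  have h1 : 1 * (MA * DPi / R0) / 2 * norm2 (x 0%N - xs) ^+ 2 <= MA * DPi * R0 / 2.
    rewrite mul1r; apply: (le_trans (ler_wpM2l _ hr)).
      by apply: divr_ge0 => //.
    rewrite le_eqVlt; apply/orP; left; apply/eqP; field; rewrite gt_eqF //.
  have h2 : MA * R0 / DPi / 2 * DPi ^+ 2 <= MA * DPi * R0 / 2.
    have [->|Dn] := eqVneq DPi 0; first by rewrite expr0n /= !mulr0 mul0r.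
    rewrite le_eqVlt; apply/orP; left; apply/eqP; field; by rewrite Dn.
  move: h1 h2; rewrite /DPi /MA => h1 h2; lra.
- move=> ap N x pi N0 _ Hd.
  have tpos : forall t, (1 <= t <= N)%N -> (0 : R) < t%:R.
    by move=> t /andP [h _]; rewrite ltr0n.
  have ct0 : 0 <= 3 * MA ^+ 2 / alpha.
    by apply: divr_ge0; [apply: mulr_ge0 => //; apply: sqr_ge0 | exact: ltW].
  have eta0 : forall t, (1 <= t <= N)%N -> 0 <= t%:R * alpha / 3.
    by move=> t ht; apply: divr_ge0 => //; apply: mulr_ge0; [exact: ltW (tpos t ht)| exact: ltW].
  have tau0 : forall t, (1 <= t <= N)%N -> 0 <= 3 * MA ^+ 2 / (t%:R * alpha).
    move=> t ht; apply: divr_ge0; first by apply: mulr_ge0 => //; apply: sqr_ge0.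
    by apply: mulr_ge0; [exact: ltW (tpos t ht)| exact: ltW].
  have wtau : forall t, (1 <= t <= N)%N -> t%:R * (3 * MA ^+ 2 / (t%:R * alpha)) = 3 * MA ^+ 2 / alpha.
    move=> t ht; field; have := tpos t ht; rewrite lt0r => /andP [-> _]; by rewrite gt_eqF.
  have wth : forall t, (2 <= t <= N)%N -> t%:R * ((t%:R - 1) / t%:R) = (t.-1)%:R :> R.
    move=> t /andP [h1 _]; case: t h1 => [//|t] _ /=.
    rewrite -natr1; field; rewrite natr1 pnatr_eq0 //.
  have cY : forall t, (2 <= t <= N)%N -> DPi = 0 \/
      (t%:R * ((t%:R - 1) / t%:R) * MA) ^+ 2 <= 3 * MA ^+ 2 / alpha * ((t.-1)%:R * ((t.-1)%:R * alpha / 3)).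
    move=> t ht; right; rewrite wth // le_eqVlt; apply/orP; left; apply/eqP; field.
    by rewrite gt_eqF.
  have cYN : DPi = 0 \/ (N%:R * MA) ^+ 2 <= 3 * MA ^+ 2 / alpha * (N%:R * (N%:R * alpha / 3)).
    right; rewrite le_eqVlt; apply/orP; left; apply/eqP; field; by rewrite gt_eqF.
  have cX3 : forall t, (1 <= t < N)%N ->
      t.+1%:R * (t.+1%:R * alpha / 3) <= t%:R * (t%:R * alpha / 3 + alpha) :> R.
    move=> t /andP [h1 _]; rewrite -natr1 -subr_ge0.
    have -> : t%:R * (t%:R * alpha / 3 + alpha) - (t%:R + 1) * ((t%:R + 1) * alpha / 3) =
              alpha / 3 * (t%:R - 1) :> R by field.
    apply: mulr_ge0; first by apply: divr_ge0 => //; exact: ltW.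
    by rewrite subr_ge0 ler1n.
  have := GB N (fun t => t%:R) (fun t => (t%:R - 1) / t%:R) (fun t => t%:R * alpha / 3)
     (fun t => 3 * MA ^+ 2 / (t%:R * alpha)) (3 * MA ^+ 2 / alpha) x pi N0 ct0 tpos eta0 tau0 wtau wth cY cYN cX3 Hd.
  move=> h; apply: le_trans h _; apply: leeD2l; rewrite lee_fin.
  set Z := alpha * norm2 (x 0%N - xs) ^+ 2 / 3 + 3 * MA ^+ 2 * DPi ^+ 2 / alpha.
  have Z0 : 0 <= Z.
    rewrite /Z; apply: addr_ge0.
    - apply: divr_ge0 => //; apply: mulr_ge0; [exact: ltW | exact: sqr_ge0].
    - apply: divr_ge0; last exact: ltW.
      apply: mulr_ge0; [apply: mulr_ge0 => //; exact: sqr_ge0 | exact: sqr_ge0].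
  set W := \sum_(1 <= t < N.+1) (t%:R : R).
  have hW : W *+ 2 = N%:R * N.+1%:R by apply: sum_nat_id.
  have Np : (0 : R) < N%:R by rewrite ltr0n.
  have W0 : 0 < W.
    have : 0 < W *+ 2 by rewrite hW; apply: mulr_gt0 => //; rewrite ltr0n.
    by rewrite pmulrn_lgt0.
  have -> : (1%:R * (1%:R * alpha / 3) / 2 * norm2 (x 0%N - xs) ^+ 2 + 3 * MA ^+ 2 / alpha / 2 * DPi ^+ 2) / W
          = Z / (W *+ 2).
    rewrite /Z mulr2n; field; rewrite gt_eqF // ?addr_gt0 //; rewrite gt_eqF //.
  rewrite hW; apply: ler_wpM2l => //.
  rewrite lef_pV2 ?posrE; first last.
  - by apply: mulr_gt0.
  - by apply: mulr_gt0 => //; rewrite ltr0n.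
  rewrite expr2; apply: ler_wpM2l; first exact: ltW.
  by rewrite ler_nat.
Qed.
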